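(* In the setting described in the context, for every $j$ with $1\leqslant j\leqslant n-1$, the set of points $\{p_J : J \text{ an ordered subset of } \{1,\ldots,|L|\},\ |J|=j\}$ is contained in an $|L|^{j}$ grid of $\pi_{j+1}$.
   Context: Let ${\mathbb K}$ be a field, $n\geqslant 2$, and consider $\mathrm{PG}_n({\mathbb K})$. For two non-intersecting subspaces $x,y$, $x\oplus y$ denotes their span. Fix points $x_0,\ldots,x_n$ in general position and put $\Sigma_i=x_0\oplus\cdots\oplus x_i$, $\pi_i=x_1\oplus\cdots\oplus x_i$ for $i=1,\ldots,n$. For $i=3,\ldots,n$ let $y_i$ be a point on the line $x_{i-1}\oplus x_i$ different from $x_{i-1}$ and $x_i$. Let $L$ be a finite set of lines of the plane $\Sigma_2$ meeting the line $\pi_2$ in pairwise distinct points, all different from $x_2$. Label them $\ell_{\{1\}},\ldots,\ell_{\{|L|\}}$ and put $p_{\{i\}}=\ell_{\{i\}}\cap\pi_2$. An ordered subset $J$ of $\{1,\ldots,|L|\}$ is a sequence of distinct elements; for $|J|\geqslant2$ write $J=(\ldots,b,a)$ ($a$ last, $b$ second-to-last) and let $J\setminus\{a\}$, $J\setminus\{b\}$ be obtained by deleting $a$, resp. $b$, keeping the order. For $2\leqslant|J|\leqslant n-1$ define recursively $p_J=(x_{|J|+1}\oplus p_{J\setminus\{a\}})\cap(y_{|J|+1}\oplus p_{J\setminus\{b\}})$, a point of $\pi_{|J|+1}$. A $N^{k}$ grid in a $k$-dimensional projective space $\mathrm{PG}_k({\mathbb K})$ is a point set which, with respect to a suitable basis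 of the underlying vector space, has the form $\{\langle(a_1,\ldots,a_k,1)\rangle : a_i\in A_i\}$, where each $A_i\subseteq{\mathbb K}$ has size $N$; here $\pi_{j+1}$ is regarded as $\mathrm{PG}_j({\mathbb K})$. *)

(* Defs.v *)
From HB Require Import structures.
From mathcomp Require Import all_boot all_order all_algebra.
Set Implicit Arguments. Unset Strict Implicit. Unset Printing Implicit Defensive.
Import GRing.Theory.
Local Open Scope ring_scope.

(* Model of PG_n(K): points/subspaces of PG_n(K) are row spaces (mxalgebra)
   of K^(n+1) = 'rV[K]_n.+1.  A point is the row space of a nonzero vector. *)

Definition pi_sp (K : fieldType) (n : nat) (x : nat -> 'rV[K]_n.+1) (k : nat)
  : 'M[K]_n.+1 := (\sum_(1 <= i < k.+1) <<x i>>)%MS.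

Definition Sigma_sp (K : fieldType) (n : nat) (x : nat -> 'rV[K]_n.+1) (k : nat)
  : 'M[K]_n.+1 := (\sum_(0 <= i < k.+1) <<x i>>)%MS.

(* p_J, by recursion on k = |J|.  For J = (..., b, a) of size k >= 2:
   J \ {a} = take (k-1) J,   J \ {b} = take (k-2) J ++ drop (k-1) J,
   p_J = (x_{k+1} (+) p_{J\{a}}) /\ (y_{k+1} (+) p_{J\{b}}). *)
Fixpoint pJ_rec (K : fieldType) (n m : nat) (x y : nat -> 'rV[K]_n.+1)
  (l : 'I_m -> 'M[K]_n.+1) (k : nat) (J : seq 'I_m) : 'M[K]_n.+1 :=
  match k with
  | 0 => 0
  | k'.+1 =>
    if k' is 0 then
      (match J with [:: i] => (l i :&: pi_sp x 2)%MS | _ => 0 end)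
    else
      ((x k.+1 + pJ_rec x y l k' (take k' J)) :&:
       (y k.+1 + pJ_rec x y l k' (take k'.-1 J ++ drop k' J)))%MS
  end.

Definition pJ (K : fieldType) (n m : nat) (x y : nat -> 'rV[K]_n.+1)
  (l : 'I_m -> 'M[K]_n.+1) (J : seq 'I_m) : 'M[K]_n.+1 :=
  pJ_rec x y l (size J) J.

(* Main.v *)
Require Import Defs.
From HB Require Import structures.
From mathcomp Require Import all_boot all_order all_algebra.
From mathcomp Require Import zify ring.
Set Implicit Arguments. Unset Strict Implicit. Unset Printing Implicit Defensive.
Import GRing.Theory.
Local Open Scope ring_scope.

Definition vec (K : fieldType) n (x : nat -> 'rV[K]_n.+1) (f : nat -> K) : 'rV_n.+1 :=
  \sum_(i < n.+1) f i *: x i.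

Lemma eq_vec (K : fieldType) n (x : nat -> 'rV[K]_n.+1) f g :
  (forall t, (t <= n)%N -> f t = g t) -> vec x f = vec x g.
Proof. move=> H; apply: eq_bigr => i _; rewrite H //; exact: ltn_ord i. Qed.

Lemma vecD (K : fieldType) n (x : nat -> 'rV[K]_n.+1) f g :
  vec x (fun t => f t + g t) = vec x f + vec x g.
Proof. rewrite /vec -big_split /=; apply: eq_bigr => i _; by rewrite scalerDl. Qed.

Lemma vecZ (K : fieldType) n (x : nat -> 'rV[K]_n.+1) r f :
  vec x (fun t => r * f t) = r *: vec x f.
Proof. rewrite /vec scaler_sumr; apply: eq_bigr => i _; by rewrite scalerA. Qed.

Definition ex (K : fieldType) (u t : nat) : K := (t == u)%:R.

Lemma vec_ex (K : fieldType) n (x : nat -> 'rV[K]_n.+1) u :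
  (u <= n)%N -> vec x (ex K u) = x u.
Proof.
move=> Hu; rewrite /vec (bigD1 (Ordinal (leq_ltn_trans Hu (ltnSn n)))) //= /ex eqxx scale1r.
rewrite big1 ?addr0 // => i Hi; case: eqP => [Hiu|]; last by rewrite scale0r.
by move: Hi; rewrite -val_eqE /= Hiu eqxx.
Qed.

Lemma vec_sum (K : fieldType) n (x : nat -> 'rV[K]_n.+1) j (F : 'I_j -> nat -> K) :
  vec x (fun t => \sum_(i < j) F i t) = \sum_(i < j) vec x (F i).
Proof.
rewrite /vec exchange_big /=; apply: eq_bigr => i _; by rewrite scaler_suml.
Qed.

Lemma vec_eq0 (K : fieldType) n (x : nat -> 'rV[K]_n.+1) f :
  row_free (\matrix_(i < n.+1) x i) -> vec x f = 0 -> forall t, (t <= n)%N -> f t = 0.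
Proof.
move=> Hf H0 t Ht.
have E : vec x f = (\row_(i < n.+1) f i) *m (\matrix_(i < n.+1) x i).
  rewrite mulmx_sum_row /vec; apply: eq_bigr => i _; by rewrite rowK mxE.
move: H0; rewrite E -(mul0mx _ (\matrix_(i < n.+1) x i)) => /(row_free_inj Hf) /rowP.
move=> /(_ (Ordinal (leq_ltn_trans Ht (ltnSn n)))); by rewrite !mxE.
Qed.
Lemma rv_sub_adds (K : fieldType) n (w a b : 'rV[K]_n) :
  (w <= a + b)%MS -> exists l r, w = l *: a + r *: b.
Proof.
case/sub_addsmxP => u ->; exists (u.1 0 0), (u.2 0 0).
by rewrite {1}[u.1]mx11_scalar {1}[u.2]mx11_scalar !mul_scalar_mx.
Qed.

Lemma capG (K : fieldType) n (a b P : 'rV[K]_n) (t s : K) :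
  (forall l r m, l *: a + r *: P + m *: b = 0 -> [/\ l = 0, r = 0 & m = 0]) ->
  ((a + P) :&: ((b + t *: a)%R + (P + s *: b)%R) == P - (t * s) *: a)%MS.
Proof.
move=> Hind; apply/andP; split.
  apply/rV_subP => w; rewrite sub_capmx => /andP [H1 H2].
  case: (rv_sub_adds H1) => l [r E1]; case: (rv_sub_adds H2) => mu [nu E2].
  have := Hind (l - mu * t) (r - nu) (- mu - nu * s).
  case.
    have -> : (l - mu * t) *: a + (r - nu) *: P + (- mu - nu * s) *: b
       = (l *: a + r *: P) - (mu *: (b + t *: a) + nu *: (P + s *: b)).
      by apply/rowP => i; rewrite !mxE; ring.
    by rewrite -E1 -E2 subrr.
  move=> _ Hr Hm; apply/sub_rVP; exists nu.
  rewrite E2; apply/rowP => i; rewrite !mxE.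
  have -> : mu = - (nu * s) by rewrite -[mu]opprK; apply/eqP; rewrite eqr_opp -subr_eq0 Hm.
  ring.
rewrite sub_capmx; apply/andP; split.
  have -> : P - (t * s) *: a = (- (t * s)) *: a + P.
    by apply/rowP => i; rewrite !mxE; ring.
  by apply: addmx_sub_adds; rewrite ?scalemx_sub ?submx_refl.
have -> : P - (t * s) *: a = (- s) *: (b + t *: a) + (P + s *: b).
  by apply/rowP => i; rewrite !mxE; ring.
by apply: addmx_sub_adds; rewrite ?scalemx_sub ?submx_refl.
Qed.
Fixpoint sig (K : fieldType) (tt : nat -> K) (u : nat) : K :=
  if u is u'.+1 then - tt u'.+3 * sig tt u' else 1.
Definition gp (K : fieldType) (g : nat -> K) u := if u is u'.+1 then g u' else 0.
Definition G (K : fieldType) (tt : nat -> K) k (g : nat -> K) t :=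
  if (2 <= t <= k.+1)%N then sig tt (t-2) * (g (t-2)%N - gp g (t-2)) else 0.

Lemma G_ext (K : fieldType) (tt : nat -> K) k g1 g2 t :
  (forall u, (u < k)%N -> g1 u = g2 u) -> G tt k g1 t = G tt k g2 t.
Proof.
move=> H; rewrite /G; case: ifP => // /andP [H1 H2].
have Hu : (t - 2 < k)%N by lia.
rewrite H //; congr (_ * (_ - _)); rewrite /gp.
case E: (t-2)%N => [|u] //; apply: H; lia.
Qed.

Lemma G_step (K : fieldType) (tt : nat -> K) k g t : (1 <= k)%N ->
  G tt k.+1 g t = G tt k g t + ex K k.+2 t * (sig tt k * (g k - g k.-1)).
Proof.
move=> Hk; rewrite /G /ex.
case: (ltngtP t k.+2) => Ht.
- rewrite mulr0n mul0r addr0; case: ifP => H; case: ifP => H' //; lia.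
- rewrite mulr0n mul0r addr0; case: ifP => H; case: ifP => H' //; lia.
- subst t; rewrite ?eqxx ?mul1r (_ : (k.+2 - 2 = k)%N); last by lia.
  rewrite ltnn andbF /= add0r.
  by case: k Hk.
Qed.

Lemma G_upd (K : fieldType) (tt : nat -> K) k g g2 t : (1 <= k)%N ->
  (forall u, (u < k.-1)%N -> g2 u = g u) -> g2 k.-1 = g k ->
  G tt k g2 t = G tt k g t + ex K k.+1 t * (sig tt k.-1 * (g k - g k.-1)).
Proof.
move=> Hk H1 H2; rewrite /G /ex.
case: (ltngtP t k.+1) => Ht.
- rewrite mulr0n mul0r addr0; case: ifP => // /andP [Ha Hb].
  rewrite H1; last by lia.
  congr (_ * (_ - _)); rewrite /gp; case E: (t-2)%N => [|u] //; apply: H1; lia.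
- by rewrite andbF mulr0n mul0r addr0.
- subst t; rewrite ?eqxx ?mul1r (_ : (k.+1 - 2 = k.-1)%N); last by lia.
  rewrite andbT ltnS Hk.
  rewrite H2 /gp; case E: k.-1 => [|u].
    rewrite subr0; ring.
  rewrite H1; last by lia.
  ring.
Qed.

Lemma sum_ex (K : fieldType) j (g : nat -> K) w : (w < j)%N ->
  \sum_(i < j) g i * ex K i w = g w.
Proof.
move=> Hw; rewrite (bigD1 (Ordinal Hw)) //= /ex eqxx mulr1 big1 ?addr0 // => i Hi.
case: eqP => [E|]; last by rewrite mulr0.
by move: Hi; rewrite -val_eqE /= E eqxx.
Qed.

Lemma G_lin (K : fieldType) (tt : nat -> K) j g t :
  G tt j g t = \sum_(i < j) g i * G tt j (ex K i) t.
Proof.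
rewrite /G; case: ifP => H; last by rewrite big1 // => i _; rewrite mulr0.
under eq_bigr => i _ do rewrite mulrCA mulrBr.
rewrite -mulr_sumr big_split /= sumrN sum_ex; last by lia.
congr (_ * (_ - _)); rewrite /gp; case E: (t-2)%N => [|u].
  by rewrite big1 // => i _; rewrite mulr0.
by rewrite sum_ex //; lia.
Qed.

Lemma ex_eq (K : fieldType) u : ex K u u = 1.
Proof. by rewrite /ex eqxx. Qed.
Lemma ex_neq (K : fieldType) u t : t != u -> ex K u t = 0.
Proof. by rewrite /ex => /negPf ->. Qed.

Definition F (K : fieldType) (tt : nat -> K) k (g : nat -> K) t := ex K 1 t + G tt k g t.

Lemma main (K : fieldType) n (x y : nat -> 'rV[K]_n.+1) m (l : 'I_m -> 'M[K]_n.+1)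
  (c : 'I_m -> K) (tt : nat -> K) :
  row_free (\matrix_(i < n.+1) x i) ->
  (forall i, (3 <= i <= n)%N -> (y i == (x i.-1 + tt i *: x i)%R)%MS) ->
  (forall i, (l i :&: pi_sp x 2 == (x 1%N + c i *: x 2%N)%R)%MS) ->
  forall k, (1 <= k)%N -> (k < n)%N -> forall J : seq 'I_m, size J = k ->
    (pJ_rec x y l k J == vec x (F tt k (fun u => nth 0 (map c J) u)))%MS.
Proof.
move=> Hfree Hy Hl; elim => [//|k IH] Hk Hkn J HJ.
case: k IH Hk Hkn HJ => [|k] IH _ Hkn HJ.
  case: J HJ => [|i [|]] //= _.
  suff -> : vec x (F tt 1 (fun u => nth 0 [:: c i] u)) = x 1%N + c i *: x 2%N  by exact: Hl.
  rewrite -(vec_ex x (_ : 1 <= n)%N); last by lia.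
  rewrite -(vec_ex x (_ : 2 <= n)%N); last by lia.
  rewrite -vecZ -vecD; apply: eq_vec => t _.
  rewrite /F /G /ex; case: t => [|[|[|t]]] /=; by rewrite ?mulr0 ?mulr1 ?addr0 ?add0r ?subr0 ?mul1r.
set g := (fun u => nth 0 [seq c i | i <- J] u).
have Hg1 : forall u, (u < k.+1)%N -> nth 0 [seq c i | i <- take k.+1 J] u = g u.
  by move=> u Hu; rewrite /g map_take nth_take.
have Hg2a : forall u, (u < k)%N -> nth 0 [seq c i | i <- take k J ++ drop k.+1 J] u = g u.
  move=> u Hu; rewrite /g map_cat nth_cat size_map size_take.
  rewrite (_ : (k < size J)%N = true); last by lia.
  by rewrite Hu map_take nth_take.
have Hg2b : nth 0 [seq c i | i <- take k J ++ drop k.+1 J] k = g k.+1.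
  rewrite /g map_cat nth_cat size_map size_take.
  rewrite (_ : (k < size J)%N = true); last by lia.
  by rewrite ltnn subnn map_drop nth_drop addn0.
have E1 := IH erefl (ltnW Hkn) (take k.+1 J) (_ : size (take k.+1 J) = k.+1).
have E2 := IH erefl (ltnW Hkn) (take k J ++ drop k.+1 J) (_ : size (take k J ++ drop k.+1 J) = k.+1).
move: E1 E2; rewrite size_take size_cat size_take size_drop HJ.
have h1 : (k.+1 < k.+2)%N by []. have h2 : (k < k.+2)%N by lia. rewrite h1 h2.
rewrite (_ : (k + (k.+2 - k.+1))%N = k.+1); last by lia.
move=> /(_ erefl) E1 /(_ erefl) E2.
set P := vec x (F tt k.+1 g).
have EP1 : vec x (F tt k.+1 (fun u => nth 0 [seq c i | i <- take k.+1 J] u)) = P.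
  apply: eq_vec => t _; rewrite /F; congr (_ + _); exact: G_ext.
set sg := sig tt k * (g k.+1 - g k).
have EP2 : vec x (F tt k.+1 (fun u => nth 0 [seq c i | i <- take k J ++ drop k.+1 J] u))
    = P + sg *: x k.+2.
  transitivity (vec x (fun t => F tt k.+1 g t + sg * ex K k.+2 t)); last first.
    by rewrite vecD vecZ (vec_ex x (ltnW Hkn)).
  apply: eq_vec => t _.
  by rewrite /F (G_upd _ _ _ (g := g)) //= addrA [sg * _]mulrC.
have ET : vec x (F tt k.+2 g) = P - (tt k.+3 * sg) *: x k.+3.
  transitivity (vec x (fun t => F tt k.+1 g t + (sig tt k.+1 * (g k.+1 - g k)) * ex K k.+3 t)).
    by apply: eq_vec => t0 _; rewrite /F G_step // addrA mulrC.
  rewrite vecD vecZ (vec_ex x Hkn) -scaleNr; congr (_ + _ *: _); rewrite /sg /=; ring.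
have Hind : forall a r b, a *: x k.+3 + r *: P + b *: x k.+2 = 0 -> [/\ a = 0, r = 0 & b = 0].
  move=> a r b H0.
  have H1 : vec x (fun t => a * ex K k.+3 t + r * F tt k.+1 g t + b * ex K k.+2 t) = 0.
    by rewrite !vecD !vecZ (vec_ex x Hkn) (vec_ex x (ltnW Hkn)).
  have Z1 := vec_eq0 Hfree H1 (_ : 1 <= n)%N.
  have Z2 := vec_eq0 Hfree H1 Hkn.
  have Z3 := vec_eq0 Hfree H1 (ltnW Hkn).
  move: Z1 Z2 Z3; rewrite /F /G /= !ex_eq !ex_neq //; try lia.
  move=> Z1; rewrite ltnn /= !mulr0 !addr0 !mulr1 => Ha Hb.
  have Hr : r = 0 by move: (Z1 (leq_ltn_trans (leq0n _) Hkn)); rewrite !mulr0 !add0r !addr0 mulr1.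
  subst r; move: Ha Hb; rewrite !mul0r !addr0 !add0r => Ha Hb; by split.
have C := capG (tt k.+3) sg Hind.
have ET2 : vec x (F tt k.+2 [eta nth 0 [seq c i | i <- J]]) = P - (tt k.+3 * sg) *: x k.+3 := ET.
rewrite ET2 /=; apply/eqmxP; apply: eqmx_trans _ (eqmxP C).
apply: cap_eqmx; apply: adds_eqmx.
- by [].
- by apply/eqmxP; rewrite -EP1.
- by apply/eqmxP; apply: Hy; lia.
- by apply/eqmxP; rewrite -EP2.
Qed.

Lemma pi_S (K : fieldType) n (x : nat -> 'rV[K]_n.+1) k :
  pi_sp x k.+1 = (pi_sp x k + <<x k.+1>>)%MS.
Proof. by rewrite /pi_sp big_nat_recr. Qed.

Lemma x_sub_pi (K : fieldType) n (x : nat -> 'rV[K]_n.+1) k t :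
  (1 <= t <= k)%N -> (x t <= pi_sp x k)%MS.
Proof.
elim: k => [|k IH] Ht; first by lia.
rewrite pi_S; case: (ltngtP t k.+1) => H.
- by apply: submx_trans (addsmxSl _ _); apply: IH; lia.
- by lia.
- by subst t; apply: submx_trans (addsmxSr _ _); rewrite genmxE.
Qed.

Lemma rank_pi (K : fieldType) n (x : nat -> 'rV[K]_n.+1) k :
  (\rank (pi_sp x k) <= k)%N.
Proof.
elim: k => [|k IH]; first by rewrite /pi_sp big_geq // mxrank0.
rewrite pi_S; apply: leq_trans (mxrank_adds_leqif _ _) _.
by rewrite genmxE; have := rank_leq_row (x k.+1); lia.
Qed.

Lemma vec_sub_pi (K : fieldType) n (x : nat -> 'rV[K]_n.+1) k f :
  (forall t, ~~ (1 <= t <= k)%N -> f t = 0) -> (vec x f <= pi_sp x k)%MS.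
Proof.
move=> Hf; apply: summx_sub => t _.
case H: (1 <= t <= k)%N; first by apply: scalemx_sub; apply: x_sub_pi.
by rewrite Hf ?H // scale0r sub0mx.
Qed.

Lemma pi2_sub (K : fieldType) n (x : nat -> 'rV[K]_n.+1) :
  (pi_sp x 2 <= x 1%N + x 2%N)%MS.
Proof.
by rewrite pi_S pi_S !addsmx_sub /pi_sp big_geq // sub0mx !genmxE addsmxSl addsmxSr.
Qed.

Lemma exists_c (K : fieldType) n (x : nat -> 'rV[K]_n.+1) (A : 'M[K]_n.+1) :
  \rank (A :&: pi_sp x 2)%MS = 1%N -> ~~ (A :&: pi_sp x 2 == x 2%N)%MS ->
  exists cc, (A :&: pi_sp x 2 == (x 1%N + cc *: x 2%N)%R)%MS.
Proof.
set B := (A :&: pi_sp x 2)%MS => HB Hn.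
have : B != 0 by rewrite -mxrank_eq0 HB.
case/rowV0Pn => v vB v0.
have vpi : (v <= x 1%N + x 2%N)%MS.
  apply: submx_trans (pi2_sub x); apply: submx_trans vB _; exact: capmxSr.
case: (rv_sub_adds vpi) => a [b Ev].
have EvB : (v == B)%MS.
  by rewrite -(mxrank_leqif_eq vB).2 HB rank_rV v0.
have Ha : a != 0.
  apply/negP => /eqP Ha; move: Ev; rewrite Ha scale0r add0r => Ev.
  have bn : b != 0 by apply: contraNneq v0 => bb; rewrite Ev bb scale0r.
  case/negP: Hn; apply/eqmxP; apply: eqmx_trans (eqmx_sym (eqmxP EvB)) _.
  by rewrite Ev; exact: eqmx_scale.
exists (b / a).
have -> : (x 1%N + b / a *: x 2%N) = a^-1 *: v.
  by rewrite Ev scalerDr !scalerA mulVf // scale1r mulrC.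
apply/eqmxP; apply: eqmx_trans (eqmx_sym (eqmxP EvB)) _.
exact: eqmx_sym (eqmx_scale v (invr_neq0 Ha)).
Qed.

Lemma exists_t (K : fieldType) n (yi xa xb : 'rV[K]_n) :
  (yi <= xa + xb)%MS -> ~~ (yi <= xa)%MS -> ~~ (yi <= xb)%MS ->
  exists t, (t != 0) && (yi == (xa + t *: xb)%R)%MS.
Proof.
move=> H Na Nb; case: (rv_sub_adds H) => a [b Ey].
have Ha : a != 0.
  apply: contraNneq Nb => Ha; by rewrite Ey Ha scale0r add0r scalemx_sub.
have Hb : b != 0.
  apply: contraNneq Na => Hb; by rewrite Ey Hb scale0r addr0 scalemx_sub.
exists (b / a); rewrite mulf_neq0 ?invr_neq0 //=.
have -> : (xa + b / a *: xb) = a^-1 *: yi.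
  by rewrite Ey scalerDr !scalerA mulVf // scale1r mulrC.
by apply/eqmxP; exact: eqmx_sym (eqmx_scale yi (invr_neq0 Ha)).
Qed.

Lemma sig_neq0 (K : fieldType) n (tt : nat -> K) :
  (forall i, (3 <= i <= n)%N -> tt i != 0) ->
  forall u, (u.+2 <= n)%N -> sig tt u != 0.
Proof.
move=> Ht; elim => [|u IH] Hu /=; first exact: oner_neq0.
rewrite mulf_neq0 ?oppr_eq0 ?Ht ?IH //; lia.
Qed.

Lemma grid_eq (K : fieldType) n (x : nat -> 'rV[K]_n.+1) (tt : nat -> K) j (g : nat -> K) r :
  (1 <= n)%N ->
  \sum_(i < j) g i *: vec x (G tt j (ex K i)) + r *: x 1%N
  = vec x (fun t => r * ex K 1 t + G tt j g t) :> 'rV_n.+1.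
Proof.
move=> Hn; rewrite vecD vecZ vec_ex // addrC; congr (_ + _).
have -> : vec x (G tt j g) = vec x (fun t => \sum_(i < j) g i * G tt j (ex K i) t).
  by apply: eq_vec => t _; exact: G_lin.
by rewrite vec_sum; apply: eq_bigr => i _; rewrite vecZ.
Qed.

Theorem lemma2p2 (K : fieldType) (n : nat) (x y : nat -> 'rV[K]_n.+1)
  (m : nat) (l : 'I_m -> 'M[K]_n.+1) :
  (2 <= n)%N ->
  row_free (\matrix_(i < n.+1) x i) ->
  (forall i : nat, (3 <= i <= n)%N ->
     [/\ y i != 0, (y i <= x i.-1 + x i)%MS, ~~ (y i <= x i.-1)%MS
       & ~~ (y i <= x i)%MS]) ->
  (forall i, \rank (l i) = 2%N /\ (l i <= Sigma_sp x 2)%MS) ->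
  (forall i, \rank (l i :&: pi_sp x 2)%MS = 1%N) ->
  (forall i k, (l i :&: pi_sp x 2 == l k :&: pi_sp x 2)%MS -> i = k) ->
  (forall i, ~~ (l i :&: pi_sp x 2 == x 2%N)%MS) ->
  forall j : nat, (1 <= j <= n.-1)%N ->
  exists (b : 'I_j.+1 -> 'rV[K]_n.+1) (A : 'I_j -> seq K),
    [/\ row_free (\matrix_(i < j.+1) b i),
        (\matrix_(i < j.+1) b i == pi_sp x j.+1)%MS,
        (forall i, uniq (A i) /\ size (A i) = m) &
        forall J : seq 'I_m, uniq J -> size J = j ->
          exists a : 'I_j -> K, (forall i, a i \in A i) /\
            (pJ x y l J ==
               (\sum_(i < j) a i *: b (widen_ord (leqnSn j) i) + b ord_max)%R)%MS].
Proof.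
move=> Hn Hfree Hy _ Hrk Hinj Hx2 j /andP [Hj1 Hjn].
have Htex : forall i, exists t : K,
    (3 <= i <= n)%N ==> ((t != 0) && (y i == (x i.-1 + t *: x i)%R)%MS).
  move=> i; case Hi: (3 <= i <= n)%N; last by exists 0.
  have [_ H1 H2 H3] := Hy i Hi.
  by case: (exists_t H1 H2 H3) => t Ht; exists t.
pose tt i := xchoose (Htex i).
have Htt : forall i, (3 <= i <= n)%N -> (tt i != 0) && (y i == (x i.-1 + tt i *: x i)%R)%MS.
  by move=> i Hi; have /implyP := xchooseP (Htex i); apply.
have Hcex : forall i, exists cc : K, (l i :&: pi_sp x 2 == (x 1%N + cc *: x 2%N)%R)%MS.
  by move=> i; apply: exists_c.
pose c i := xchoose (Hcex i).
have Hc : forall i, (l i :&: pi_sp x 2 == (x 1%N + c i *: x 2%N)%R)%MS.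
  by move=> i; exact: xchooseP (Hcex i).
have cinj : injective c.
  move=> i k Hik; apply: Hinj; apply/eqmxP.
  apply: eqmx_trans (eqmxP (Hc i)) _; rewrite Hik; exact: eqmx_sym (eqmxP (Hc k)).
have Hjn' : (j < n)%N by lia.
have Hmain := @main K n x y m l c tt Hfree
  (fun i Hi => proj2 (andP (Htt i Hi))) Hc j Hj1 Hjn'.
have Htt0 : forall i, (3 <= i <= n)%N -> tt i != 0.
  by move=> i Hi; case/andP: (Htt i Hi).
pose b (i : 'I_j.+1) := if (i < j)%N then vec x (G tt j (ex K i)) else x 1%N.
have bw : forall i : 'I_j, b (widen_ord (leqnSn j) i) = vec x (G tt j (ex K i)).
  by move=> i; rewrite /b /= ltn_ord.
have bm : b ord_max = x 1%N by rewrite /b /= ltnn.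
have n1 : (1 <= n)%N by lia.
exists b, (fun _ => map c (enum 'I_m)).
have Bfree : row_free (\matrix_(i < j.+1) b i).
  rewrite -kermx_eq0; apply/rowV0P => v /sub_kermxP Hv.
  pose g u := v 0 (inord u).
  have E : vec x (fun t => g j * ex K 1 t + G tt j g t) = 0.
    rewrite -grid_eq //; transitivity (v *m \matrix_(i < j.+1) b i); last exact: Hv.
    rewrite mulmx_sum_row big_ord_recr /= rowK bm /g.
    have -> : (inord j : 'I_j.+1) = ord_max by apply/val_inj; rewrite /= inordK.
    congr (_ + _); apply: eq_bigr => i _.
    rewrite rowK bw; congr (_ *: _); congr (v 0 _); apply/val_inj.
    by rewrite /= inordK //; apply: leqW.
  have gj : g j = 0.
    have := vec_eq0 Hfree E n1; rewrite /G /= ex_eq mulr1 addr0; exact.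
  have gu : forall u, (u < j)%N -> g u = 0.
    elim => [|u IH] Hu.
      have := vec_eq0 Hfree E Hn; rewrite /G /= ex_neq // mulr0 add0r.
      by rewrite ltnS Hj1 subr0 mul1r.
    have h3 : (u.+3 <= n)%N by lia.
    have := vec_eq0 Hfree E h3; rewrite /G /= ex_neq // mulr0 add0r.
    have h4 : (u.+2 <= j)%N by lia.
    rewrite ltnS h4 /=.
    rewrite (_ : (u.+3 - 2)%N = u.+1); last by lia.
    rewrite /gp IH; last by lia.
    move/eqP; rewrite mulf_eq0 subr0 => /orP [|/eqP //].
    by move=> H; have := sig_neq0 Htt0 h3; rewrite /= H.
  apply/rowP => k; rewrite mxE.
  have -> : k = inord k by rewrite inord_val.
  case: (ltngtP k j) => Hk.
  - exact: gu.
  - by have := ltn_ord k; lia.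
  - by rewrite /g Hk in gj *.
split => //.
- have Hsub : (\matrix_(i < j.+1) b i <= pi_sp x j.+1)%MS.
    apply/row_subP => i; rewrite rowK /b; case: ifP => _.
      apply: vec_sub_pi => t Ht; rewrite /G ifF //; lia.
    by apply: x_sub_pi.
  rewrite -(mxrank_leqif_eq Hsub).2 (eqP Bfree) eqn_leq rank_pi /=.
  rewrite andbT; apply: leq_trans (mxrankS Hsub); by rewrite (eqP Bfree).
- move=> i; split; last by rewrite size_map size_enum_ord.
  by rewrite map_inj_uniq ?enum_uniq.
- move=> J _ HJ; exists (fun i => nth 0 (map c J) i); split.
    move=> i; have : nth 0 (map c J) i \in map c J by rewrite mem_nth // size_map HJ.
    by case/mapP => k _ ->; rewrite map_f // mem_enum.
  rewrite /pJ HJ; apply/eqmxP; apply: eqmx_trans (eqmxP (Hmain J HJ)) _.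
  rewrite bm; under eq_bigr => i _ do rewrite bw.
  rewrite -[x 1%N]scale1r grid_eq //.
  apply/eqmxP; rewrite (_ : vec x _ = vec x (fun t => 1 * ex K 1 t + G tt j
     (fun i => nth 0 (map c J) i) t)) ?submx_refl //.
  by apply: eq_vec => t _; rewrite mul1r.
Qed.
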